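(* If $r\ge 2$, then the glued binary tree $GT(r)$ satisfies $\mu(GT(r))=2^r+1$, and the number of $\mu$-sets of $GT(r)$ is $\#\mu(GT(r))=2^{r+1}-2$.
   Context: A perfect binary tree of depth $r\ge1$ is a rooted tree in which every non-leaf vertex has exactly $2$ children and all leaves have depth $r$. The glued binary tree $GT(r)$ is obtained from two copies of the perfect binary tree of depth $r$ by pairwise identifying their leaves (via a fixed isomorphism of the copies). For $S\subseteq V(G)$, two vertices $u,v$ are $S$-visible if there exists a shortest $u,v$-path $P$ with $V(P)\cap S\subseteq\{u,v\}$; $S$ is a mutual-visibility set if every two vertices of $S$ are $S$-visible. A largest mutual-visibility set is a $\mu$-set, and its size is the mutual-visibility number $\mu(G)$. $\#\mu(G)$ denotes the number of $\mu$-sets of $G$. *)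

(* Defs.v *)
From mathcomp Require Import all_boot.
Set Implicit Arguments. Unset Strict Implicit. Unset Printing Implicit Defensive.

Section Graph.
Variables (T : finType) (e : rel T).

Definition walk (u : T) (p : seq T) (v : T) : Prop :=
  path e u p /\ last u p = v.

Definition shortest_path (u : T) (p : seq T) (v : T) : Prop :=
  walk u p v /\ forall q, walk u q v -> size p <= size q.

Definition S_visible (S : {set T}) (u v : T) : Prop :=
  exists p, shortest_path u p v /\
    forall x, x \in u :: p -> x \in S -> x = u \/ x = v.

Definition mutual_visibility_set (S : {set T}) : Prop :=
  forall u v, u \in S -> v \in S -> S_visible S u v.

Definition mu_set (S : {set T}) : Prop :=
  mutual_visibility_set S /\
  forall S', mutual_visibility_set S' -> #|S'| <= #|S|.

Definition mu_number (n : nat) : Prop :=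
  (exists S, mutual_visibility_set S /\ #|S| = n) /\
  forall S, mutual_visibility_set S -> #|S| <= n.

Definition num_mu_sets (k : nat) : Prop :=
  exists M : {set {set T}}, (forall S, S \in M <-> mu_set S) /\ #|M| = k.
End Graph.

(* A vertex of a perfect binary tree of depth r is a binary word of length d <= r
   (the root is the empty word, the children of w are w++[0] and w++[1]).
   A vertex of GT(r) is a pair (copy, word); the leaves (words of length r)
   of the two copies are identified, represented with copy = false. *)
Definition GTV (r : nat) :=
  {x : bool * {d : 'I_r.+1 & d.-tuple bool} | (tag x.2 == r :> nat) ==> ~~ x.1}.

Definition gt_copy r (x : GTV r) : bool := (val x).1.
Definition gt_word r (x : GTV r) : seq bool := tagged (val x).2.

Definition gt_child r (x y : GTV r) : bool :=
  (gt_word y \in [:: rcons (gt_word x) false; rcons (gt_word x) true]) &&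
  ((gt_copy x == gt_copy y) || (size (gt_word y) == r)).

Definition gt_adj r : rel (GTV r) := fun x y => gt_child x y || gt_child y x.

(* Main.v *)
Require Import Defs.
From mathcomp Require Import all_boot zify.
Set Implicit Arguments. Unset Strict Implicit. Unset Printing Implicit Defensive.

Fixpoint lcp (s t : seq bool) : nat :=
  if s is x :: s' then (if t is y :: t' then (if x == y then (lcp s' t').+1 else 0) else 0) else 0.

Lemma lcpC s t : lcp s t = lcp t s.
Proof. elim: s t => [|x s IH] [|y t] //=; rewrite eq_sym IH; by case: (y == x). Qed.

Lemma lcp_leq_l s t : lcp s t <= size s.
Proof. elim: s t => [|x s IH] [|y t] //=; case: (x == y) => //; exact: IH. Qed.

Lemma lcp_leq_r s t : lcp s t <= size t.
Proof. by rewrite lcpC lcp_leq_l. Qed.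

Lemma lcpss s : lcp s s = size s.
Proof. by elim: s => [|x s IH] //=; rewrite eqxx IH. Qed.

Lemma lcp_min a b c : minn (lcp a b) (lcp b c) <= lcp a c.
Proof.
elim: a b c => [|x a IH] [|y b] [|z c] //=; try by rewrite ?minn0 ?min0n.
case: (x =P y) => [<-|_]; last by rewrite min0n.
by case: (x == z); rewrite ?minnSS ?ltnS ?IH ?minn0.
Qed.

Lemma lcp_eq s t : lcp s t = size s -> size s = size t -> s = t.
Proof.
elim: s t => [|x s IH] [|y t] //=.
case: (x =P y) => [<- [] h [] h2|//]; by rewrite (IH t h h2).
Qed.

Lemma lcp_rcons_ge s x t : lcp s t <= lcp (rcons s x) t.
Proof. elim: s t => [|y s IH] [|z t] //=; case: (y == z) => //; by rewrite ltnS IH. Qed.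

Lemma lcp_rcons_le s x t : lcp (rcons s x) t <= (lcp s t).+1.
Proof. elim: s t => [|y s IH] [|z t] //=; first by case: (x == z).
case: (y == z) => //; by rewrite ltnS IH. Qed.

Lemma lcp_rcons_S s x t : lcp (rcons s x) t = (lcp s t).+1 -> lcp s t = size s.
Proof. elim: s t => [|y s IH] [|z t] //=; case: (y == z) => // h.
by rewrite (IH t) //; case: h. Qed.

Lemma lcp_cat s u : lcp s (s ++ u) = size s.
Proof. by elim: s => [|x s IH] //=; rewrite eqxx IH. Qed.

Lemma lcp_rcons_nth s t : lcp s t = size s -> size s < size t ->
  lcp (rcons s (nth false t (size s))) t = (size s).+1.
Proof.
elim: s t => [|x s IH] [|y t] //=; first by rewrite eqxx; case: t.
case: (x =P y) => [_ [] h|//]. by rewrite ltnS => /(IH _ h) ->.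
Qed.

Lemma lcp_rcons_nth2 s t : lcp s t = size s -> size s < size t ->
  lcp (rcons s (~~ nth false t (size s))) t = size s.
Proof.
elim: s t => [|x s IH] [|y t] //=; first by case: y => //=.
case: (x =P y) => [_ [] h|//]. by rewrite ltnS => /(IH _ h) ->.
Qed.

Definition inw (t s : seq bool) := lcp t s == size t.
Definition dT (a b : seq bool) := size a + size b - 2 * lcp a b.

Lemma dTC a b : dT a b = dT b a.
Proof. by rewrite /dT lcpC addnC. Qed.

Lemma dTaa a : dT a a = 0.
Proof. rewrite /dT lcpss; lia. Qed.

Lemma dT0 a b : dT a b = 0 -> a = b.
Proof.
rewrite /dT => h; have h1 := lcp_leq_l a b; have h2 := lcp_leq_r a b.
apply: lcp_eq; lia.
Qed.

Lemma inw_refl s : inw s s.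
Proof. by rewrite /inw lcpss. Qed.

Lemma inw_size t s : inw t s -> size t <= size s.
Proof. move/eqP=> <-; exact: lcp_leq_r. Qed.

Lemma inw_trans u v s : inw u v -> inw v s -> inw u s.
Proof.
rewrite /inw => /eqP h1 /eqP h2; have := lcp_min u v s; have := lcp_leq_l u s.
have := lcp_leq_r u v. rewrite h1 h2 => *. apply/eqP. lia.
Qed.

Lemma inw_cat s u : inw s (s ++ u).
Proof. by rewrite /inw lcp_cat. Qed.

Lemma inw_rcons w b s : inw (rcons w b) s -> inw w s.
Proof. apply: inw_trans; rewrite -cats1; exact: inw_cat. Qed.

Lemma inw_comp w v s : inw w s -> inw v s -> inw w v || inw v w.
Proof.
rewrite /inw => /eqP h1 /eqP h2; have := lcp_min w s v; rewrite (lcpC s v) h1 h2.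
have := lcp_leq_l w v; have := lcp_leq_r w v; rewrite (lcpC v w) => *.
case: (leqP (size w) (size v)) => h; [apply/orP; left|apply/orP; right]; apply/eqP; lia.
Qed.

Lemma inw_eq t s : inw t s -> size t = size s -> t = s.
Proof. move/eqP; exact: lcp_eq. Qed.

Lemma inw_rcons_uniq w b1 b2 s : inw (rcons w b1) s -> inw (rcons w b2) s -> b1 = b2.
Proof.
move=> h1 h2; have /orP [] := inw_comp h1 h2 => /inw_eq; rewrite !size_rcons => /(_ erefl) /rcons_inj; by case.
Qed.

Lemma inw_nth v a : inw v a -> size v < size a -> inw (rcons v (nth false a (size v))) a.
Proof. rewrite /inw size_rcons => /eqP h1 h2; by rewrite lcp_rcons_nth. Qed.

Lemma dT_between a b w bt : inw (rcons w bt) a -> ~~ inw (rcons w bt) b ->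
  dT a b = dT a w + dT w b.
Proof.
move=> h1 h2; have hwa := inw_rcons h1.
have hsa := inw_size h1; rewrite size_rcons in hsa.
move: (hwa); rewrite /inw lcpC => /eqP hwa'.
rewrite /dT hwa'.
have m1 := lcp_min a w b; have m2 := lcp_min w a b; rewrite hwa' in m1; rewrite lcpC hwa' in m2.
have l1 := lcp_leq_l w b; have l2 := lcp_leq_r a b.
case: (ltnP (lcp w b) (size w)) => hl.
  have e : lcp a b = lcp w b by lia.
  rewrite e; have := lcp_leq_r w b; lia.
have e1 : lcp w b = size w by lia.
have e2 : lcp a b = size w.
  apply/eqP; rewrite eqn_leq; apply/andP; split; last by lia.
  rewrite leqNgt; apply/negP => hlt.
  have m3 := lcp_min (rcons w bt) a b; move: h1 h2; rewrite /inw => /eqP h1.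
  rewrite h1 size_rcons in m3 *. have := lcp_leq_l (rcons w bt) b; rewrite size_rcons => h4 /negP; apply; apply/eqP; lia.
rewrite e1 e2; have := lcp_leq_r w b; lia.
Qed.

Section GT.
Variable r : nat.
Notation V := (GTV r).

Lemma size_wd (x : V) : size (gt_word x) <= r.
Proof. by rewrite /gt_word size_tuple -ltnS ltn_ord. Qed.

Lemma leaf_copy (x : V) : size (gt_word x) = r -> gt_copy x = false.
Proof.
case: x => [[c [d t]]] /= P; rewrite /gt_word /gt_copy /= size_tuple => hd.
by move: P; rewrite hd eqxx /=; case: c.
Qed.

Lemma tag_ext (u v : {d : 'I_r.+1 & d.-tuple bool}) : (tagged u : seq bool) = tagged v -> u = v.
Proof.
case: u v => [d t] [d' t'] /= h.
have e : d = d' by apply: val_inj; rewrite /= -(size_tuple t) -(size_tuple t') h.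
subst d'; congr existT; exact: val_inj.
Qed.

Lemma vext (x y : V) : gt_copy x = gt_copy y -> gt_word x = gt_word y -> x = y.
Proof.
case: x y => [[c u] P] [[c' u'] P'] /=; rewrite /gt_copy /gt_word /= => hc hw.
subst c'; have e := tag_ext hw; subst u'; congr exist; exact: bool_irrelevance.
Qed.

Definition mkw (w : seq bool) : {d : 'I_r.+1 & d.-tuple bool} :=
  match ltnP (size w) r.+1 with
  | LtnNotGeq h => existT _ (Ordinal h) (in_tuple w)
  | GeqNotLtn _ => existT (fun d : 'I_r.+1 => d.-tuple bool) ord0 [tuple]
  end.

Lemma mkwE w : size w <= r -> (tagged (mkw w) : seq bool) = w.
Proof. rewrite /mkw -ltnS; by case: ltnP. Qed.

Lemma mkw_tag w : (tag (mkw w) == r :> nat) ==> ~~ (size w < r).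
Proof.
rewrite /mkw; case: ltnP => /= h.
  by apply/implyP => /eqP ->; rewrite ltnn.
by apply/implyP => _; rewrite -leqNgt ltnW.
Qed.

Lemma mk_proof c w : (tag (mkw w) == r :> nat) ==> ~~ (c && (size w < r)).
Proof.
have := mkw_tag w; case: (tag (mkw w) == r :> nat) => //= h.
by rewrite negb_and h orbT.
Qed.

Definition mk c w : V := @exist _ (fun x : bool * {d : 'I_r.+1 & d.-tuple bool} => (tag x.2 == r :> nat) ==> ~~ x.1) (c && (size w < r), mkw w) (mk_proof c w).

Lemma mk_word c w : size w <= r -> gt_word (mk c w) = w.
Proof. exact: mkwE. Qed.

Lemma mk_copy c w : gt_copy (mk c w) = c && (size w < r).
Proof. by []. Qed.

Lemma mkE (x : V) : mk (gt_copy x) (gt_word x) = x.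
Proof.
apply: vext; rewrite ?mk_word ?size_wd // mk_copy.
have := size_wd x; rewrite leq_eqVlt => /orP [/eqP h|->]; last by rewrite andbT.
by rewrite h ltnn andbF leaf_copy.
Qed.

Lemma mkE2 c (x : V) : (size (gt_word x) = r \/ gt_copy x = c) -> mk c (gt_word x) = x.
Proof.
move=> h; apply: vext; rewrite ?mk_word ?size_wd // mk_copy.
case: h => [h|<-]; first by rewrite h ltnn andbF leaf_copy.
have := size_wd x; rewrite leq_eqVlt => /orP [/eqP h|->]; last by rewrite andbT.
by rewrite h ltnn andbF leaf_copy.
Qed.

Lemma adj_word (x y : V) : gt_adj x y ->
  (exists b, gt_word y = rcons (gt_word x) b) \/ (exists b, gt_word x = rcons (gt_word y) b).
Proof.
rewrite /gt_adj /gt_child !inE => /orP [] /andP [h _].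
  by left; case/orP: h => /eqP ->; eexists.
by right; case/orP: h => /eqP ->; eexists.
Qed.

Lemma adj_copy (x y : V) : gt_adj x y -> size (gt_word x) < r -> size (gt_word y) < r ->
  gt_copy x = gt_copy y.
Proof.
rewrite /gt_adj /gt_child => /orP [] /andP [_ /orP [/eqP //|/eqP h]] h1 h2.
  by rewrite h ltnn in h2.
by rewrite h ltnn in h1.
Qed.

Lemma adj_mk c w b : size (rcons w b) <= r -> gt_adj (mk c w) (mk c (rcons w b)).
Proof.
move=> h; have hw : size w <= r by move: h; rewrite size_rcons; apply: ltnW.
apply/orP; left; rewrite /gt_child !mk_word // !mk_copy !inE.
apply/andP; split; first by case: (b); rewrite eqxx ?orbT.
move: h; rewrite size_rcons leq_eqVlt => /orP [/eqP ->|h]; first by rewrite eqxx orbT.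
by rewrite h orbT eqxx.
Qed.

Lemma adj_sym : symmetric (@gt_adj r).
Proof. by move=> x y; rewrite /gt_adj orbC. Qed.

Lemma dT_rcons t w b : dT t (rcons w b) <= (dT t w).+1 /\ dT t w <= (dT t (rcons w b)).+1.
Proof.
rewrite /dT !(lcpC t) size_rcons.
have h1 := lcp_rcons_ge w b t; have h2 := lcp_rcons_le w b t.
have h3 := lcp_leq_l w t; have h4 := lcp_leq_r w t; have h5 := lcp_leq_r (rcons w b) t.
split; first by lia.
case: (ltnP (lcp w t) (lcp (rcons w b) t)) => h; last by lia.
have e : lcp (rcons w b) t = (lcp w t).+1 by lia.
have := lcp_rcons_S e; lia.
Qed.

Lemma adj_dT t (x y : V) : gt_adj x y -> dT t (gt_word y) <= (dT t (gt_word x)).+1.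
Proof.
case/adj_word => [[b ->]|[b ->]]; [exact: (dT_rcons t (gt_word x) b).1 | exact: (dT_rcons t (gt_word y) b).2].
Qed.

Lemma walk_lb t (x y : V) p : walk (@gt_adj r) x p y -> dT t (gt_word x) <= dT t (gt_word y) + size p.
Proof.
elim: p x => [|z p IH] x [] /=; first by move=> _ ->; rewrite addn0.
move=> /andP [hxz hp] hl.
have := IH z (conj hp hl); have := adj_dT t (hxz : gt_adj _ _).
rewrite adj_sym in hxz; have := adj_dT t (hxz : gt_adj _ _). move=> h1 _ h2; rewrite addnS; apply: (leq_trans h1); by rewrite ltnS.
Qed.

Lemma walk_lb2 (x y : V) p : walk (@gt_adj r) x p y -> dT (gt_word x) (gt_word y) <= size p.
Proof.
move=> /(walk_lb (gt_word y)); rewrite dTaa dTC; lia.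
Qed.

End GT.

Section GT3.
Variable r : nat.
Notation V := (GTV r).
Notation adj := (@gt_adj r).

Lemma walk_exists c n : forall a b, size a <= r -> size b <= r -> dT a b = n ->
  exists p, walk adj (mk r c a) p (mk r c b) /\ size p = n /\
   forall x, x \in p -> x != mk r c b -> size (gt_word x) < r /\ gt_copy x = c.
Proof.
elim: n => [|n IH] a b ha hb hd.
  by move: (dT0 hd) => ->; exists [::].
have hab : a != b by apply/eqP => e; rewrite e dTaa in hd.
have l1 := lcp_leq_l a b; have l2 := lcp_leq_r a b.
case: (boolP (lcp a b == size a)) => [/eqP hl|hl].
  have hs : size a < size b.
    rewrite ltn_neqAle (_ : size a <= size b) ?andbT; last by rewrite -hl.
    apply/negP => /eqP e.
    by move: hab; rewrite (lcp_eq hl) ?eqxx // -e.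
  set a' := rcons a (nth false b (size a)).
  have ha' : lcp a' b = size a' by rewrite /a' size_rcons lcp_rcons_nth.
  have hsa' : size a' <= size b by rewrite /a' size_rcons.
  have hd' : dT a' b = n by move: hd; rewrite /dT ha' /a' size_rcons hl /=; lia.
  have [p [[hp hlast] [hsz hint]]] := IH a' b (leq_trans hsa' hb) hb hd'.
  exists (mk r c a' :: p); split; [split|split] => //=.
    by rewrite hp andbT; apply: adj_mk; apply: leq_trans hsa' hb.
  by rewrite hsz.
  move=> x; rewrite inE => /orP [/eqP ->|/hint //] hx.
  have hsa'r : size a' < r.
    rewrite ltn_neqAle (leq_trans hsa' hb) andbT; apply/negP => /eqP e.
    have eab : a' = b by apply: lcp_eq => //; apply/eqP; rewrite eqn_leq hsa' /= e hb.
    by move: hx; rewrite eab eqxx.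
  by rewrite mk_word ?(ltnW hsa'r) // mk_copy hsa'r andbT.
have ha0 : a != [::] by apply/eqP => e; move: hl; rewrite e.
case/lastP: a ha ha0 hd hab l1 l2 hl => [//|a' bt] ha _ hd hab l1 l2 hl.
have hl' : lcp (rcons a' bt) b = lcp a' b.
  have g1 := lcp_rcons_ge a' bt b; have g2 := lcp_rcons_le a' bt b.
  case: (ltnP (lcp a' b) (lcp (rcons a' bt) b)) => h; last by lia.
  have e : lcp (rcons a' bt) b = (lcp a' b).+1 by lia.
  by move: hl; rewrite e (lcp_rcons_S e) size_rcons eqxx.
have ha'r : size a' < r by move: ha; rewrite size_rcons.
have hd' : dT a' b = n by move: hd; rewrite /dT hl' size_rcons; have := lcp_leq_l a' b; lia.
have [p [[hp hlast] [hsz hint]]] := IH a' b (ltnW ha'r) hb hd'.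
exists (mk r c a' :: p); split; [split|split] => //=.
  by rewrite hp andbT adj_sym; apply: adj_mk.
by rewrite hsz.
move=> x; rewrite inE => /orP [/eqP ->|/hint //] hx.
by rewrite mk_word ?(ltnW ha'r) // mk_copy ha'r andbT.
Qed.

Lemma shortest_exists c a b : size a <= r -> size b <= r ->
  exists p, shortest_path adj (mk r c a) p (mk r c b) /\ size p = dT a b /\
   forall x, x \in p -> x != mk r c b -> size (gt_word x) < r /\ gt_copy x = c.
Proof.
move=> ha hb; have [p [hw [hs hi]]] := walk_exists c ha hb erefl.
exists p; split => //; split => // q hq.
by rewrite hs -(mk_word c ha) -(mk_word c hb); apply: walk_lb2.
Qed.

Lemma vis_construct (S : {set V}) c a b : size a <= r -> size b <= r ->
  (forall x, x \in S -> size (gt_word x) < r -> gt_copy x = c -> x = mk r c a \/ x = mk r c b) ->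
  S_visible adj S (mk r c a) (mk r c b).
Proof.
move=> ha hb hS; have [p [hsp [_ hi]]] := shortest_exists c ha hb.
exists p; split => // x; rewrite inE => /orP [/eqP -> _|hx hxS]; first by left.
case: (x =P mk r c b) => [->|/eqP ne]; first by right.
by have [h1 h2] := hi x hx ne; apply: hS.
Qed.

Lemma shortest_size c (y z : V) p :
  (size (gt_word y) = r \/ gt_copy y = c) -> (size (gt_word z) = r \/ gt_copy z = c) ->
  shortest_path adj y p z -> size p = dT (gt_word y) (gt_word z).
Proof.
move=> hy hz [hw hmin].
have [p' [[hw' _] [hs _]]] := shortest_exists c (size_wd y) (size_wd z).
rewrite (mkE2 hy) (mkE2 hz) in hw'.
apply/eqP; rewrite eqn_leq walk_lb2 // andbT -hs; exact: hmin.
Qed.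

Lemma arith1 A B L1 L2 L R Q1 Q2 : minn L1 L2 <= L -> L1 <= A -> L1 <= R -> L2 <= R -> L2 <= B -> L <= A -> L <= B ->
  A + R - 2 * L1 <= Q1.+1 -> R + B - 2 * L2 <= Q2.+1 -> Q1 + Q2.+2 = A + B - 2 * L -> L1 = R \/ L2 = R.
Proof. lia. Qed.
Lemma arith2 X Y Q1 Q2 : X <= Q2.+1 -> Q1 + Q2.+2 = Y -> X = Y -> False.
Proof. lia. Qed.
Lemma arith3 X Y Q1 Q2 : X <= Q1.+1 -> Q1 + Q2.+2 = Y -> X = Y -> False.
Proof. lia. Qed.

Lemma interior_internal (y z : V) q : walk adj y (rcons q z) z ->
  size (rcons q z) = dT (gt_word y) (gt_word z) -> forall x, x \in q -> size (gt_word x) < r.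
Proof.
move=> hw hs x hx; case/splitPr: hx hw hs => q1 q2 [hp _].
move: hp; rewrite rcons_cat cat_path /= => /andP [hp1 /andP [hx hp2]].
set a := gt_word y; set b := gt_word z; set wx := gt_word x => hs.
have w1 : walk adj y (rcons q1 x) x by split; [rewrite rcons_path hp1 | rewrite last_rcons].
have w2 : walk adj x (rcons q2 z) z by split; [ | rewrite last_rcons].
have d1 := walk_lb2 w1; have d2 := walk_lb2 w2.
move: hs d1 d2; rewrite size_cat /= !size_rcons => hs d1 d2.
rewrite ltn_neqAle size_wd andbT; apply/negP => /eqP hr.
have m := lcp_min a wx b.
have e1 := lcp_leq_l a wx; have e2 := lcp_leq_r a wx; have e3 := lcp_leq_l wx b; have e4 := lcp_leq_r wx b.
have e5 := lcp_leq_l a b; have e6 := lcp_leq_r a b.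
have sa := size_wd y; have sb := size_wd z.
move: d1 d2 hs; rewrite /dT -/a -/b -/wx hr => d1 d2 hs.
rewrite hr in e2 e3; rewrite -/a in sa; rewrite -/b in sb.
clearbody a b wx.
have [h|h] := arith1 m e1 e2 e3 e4 e5 e6 d1 d2 hs.
  have ea : a = wx by apply: lcp_eq; lia.
  have hA : size a = r by lia.
  move: d2; rewrite -ea => d2; apply: (arith2 d2 hs); lia.
have eb : wx = b by apply: lcp_eq; lia.
have hB : size b = r by lia.
move: d1; rewrite eb => d1; apply: (arith3 d1 hs); lia.
Qed.

Lemma copy_const (y : V) q : path adj y q -> all (fun x : V => size (gt_word x) < r) (y :: q) ->
  all (fun x : V => gt_copy x == gt_copy y) q.
Proof.
elim: q y => [|x q IH] y //= /andP [hyx hp] /and3P [hy hx hq].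
have e := adj_copy hyx hy hx; rewrite e eqxx /=.
by apply: IH => //=; rewrite hx.
Qed.

Lemma inw_rcons_r t s b : inw t s -> inw t (rcons s b).
Proof. move=> h; apply: inw_trans h _; rewrite -cats1; exact: inw_cat. Qed.

Lemma cut_step u bt (x x' : V) : adj x x' -> inw (rcons u bt) (gt_word x) ->
  ~~ inw (rcons u bt) (gt_word x') -> gt_word x' = u.
Proof.
case/adj_word => [[b ->] h1 /negP h2|[b ->] h1 h2]; first by case: h2; apply: inw_rcons_r.
set w' := gt_word x' in h1 h2 *.
move: h1 h2; rewrite /inw => /eqP h1 h2.
have g2 := lcp_rcons_le w' b (rcons u bt).
have g3 := lcp_leq_r w' (rcons u bt).
rewrite !(lcpC (rcons u bt)) in h1 h2 *.
have e : lcp (rcons w' b) (rcons u bt) = (lcp w' (rcons u bt)).+1.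
  move: h2; rewrite size_rcons in h1 g3 *; lia.
have hw := lcp_rcons_S e.
have hsz : size w' = size u by move: h1 e g3; rewrite hw !size_rcons; lia.
have i1 : inw w' (rcons u bt) by rewrite /inw hw.
have i2 : inw u (rcons u bt) by rewrite -cats1; exact: inw_cat.
by case/orP: (inw_comp i1 i2) => /inw_eq /(_ _) -> //.
Qed.

Lemma cut_out u bt (y z : V) p : walk adj y p z -> inw (rcons u bt) (gt_word y) ->
  ~~ inw (rcons u bt) (gt_word z) -> exists2 x, x \in p & gt_word x = u.
Proof.
elim: p y => [|x p IH] y [/= hp hl]; first by rewrite hl => ->.
move/andP: hp => [hyx hp] hy hz.
case: (boolP (inw (rcons u bt) (gt_word x))) => hx.
  by have [x' hx' e] := IH x (conj hp hl) hx hz; exists x' => //; rewrite inE hx' orbT.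
exists x; first by rewrite inE eqxx.
exact: (cut_step hyx hy hx).
Qed.

Lemma cut_in u bt (y z : V) p : walk adj y p z -> ~~ inw (rcons u bt) (gt_word y) ->
  inw (rcons u bt) (gt_word z) -> exists2 x, x \in y :: p & gt_word x = u.
Proof.
elim: p y => [|x p IH] y [/= hp hl]; first by rewrite hl => /negP.
move/andP: hp => [hyx hp] hy hz.
case: (boolP (inw (rcons u bt) (gt_word x))) => hx.
  exists y; first by rewrite inE eqxx.
  have hxy : adj x y by rewrite adj_sym.
  exact: (cut_step hxy hx hy).
have [x' hx' e] := IH x (conj hp hl) hx hz; exists x' => //; by rewrite inE hx' orbT.
Qed.

End GT3.

Definition SB1 (a b w : seq bool) := [exists bt : bool, inw (rcons w bt) a && ~~ inw (rcons w bt) b] && (b != w).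
Definition SB (a b w : seq bool) := SB1 a b w || SB1 b a w.

Lemma SB1_intro a b w bt : inw (rcons w bt) a -> ~~ inw (rcons w bt) b -> b != w -> SB1 a b w.
Proof. by move=> h1 h2 h3; rewrite /SB1 h3 andbT; apply/existsP; exists bt; rewrite h1 h2. Qed.

Lemma SB1_elim a b w : SB1 a b w -> exists bt, [/\ inw (rcons w bt) a, ~~ inw (rcons w bt) b & b != w].
Proof. by case/andP => /existsP [bt /andP [h1 h2]] h3; exists bt. Qed.

Lemma inw_rcons_ne w bt a : inw (rcons w bt) a -> a != w.
Proof. move/inw_size; rewrite size_rcons; apply: contraTneq => ->; by rewrite ltnn. Qed.

Lemma SB_ne a b w : SB a b w -> [/\ a != w, b != w & a != b].
Proof.
case/orP => /SB1_elim [bt [h1 h2 h3]].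
  split => //; first exact: inw_rcons_ne h1.
  by apply: contraNneq h2 => <-.
split => //; first exact: inw_rcons_ne h1.
by apply: contraNneq h2 => ->.
Qed.

Lemma SB_dT a b w : SB a b w -> dT a b = dT a w + dT w b.
Proof.
case/orP => /SB1_elim [bt [h1 h2 _]]; first exact: dT_between h1 h2.
rewrite dTC (dT_between h1 h2) addnC; congr (_ + _); exact: dTC.
Qed.

Lemma SB_sym a b w : SB a b w -> SB b a w.
Proof. by rewrite /SB orbC. Qed.

Section GT4.
Variable r : nat.
Notation V := (GTV r).
Notation adj := (@gt_adj r).

Lemma hit (y z : V) p w : walk adj y p z -> SB (gt_word y) (gt_word z) w ->
  exists2 x, x \in p & gt_word x = w.
Proof.
move=> hw hsb; have [ne1 ne2 _] := SB_ne hsb.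
case/orP: hsb => /SB1_elim [bt [h1 h2 _]]; first exact: cut_out hw h1 h2.
have [x hx e] := cut_in hw h2 h1; exists x => //.
move: hx; rewrite inE => /orP [/eqP exy|//]; by move: ne1; rewrite -e exy eqxx.
Qed.

Lemma shortest_rcons (y z : V) p : shortest_path adj y p z -> y != z ->
  exists q, p = rcons q z.
Proof.
case/lastP: p => [|q z'] [[_ hl] _] ne; first by move: ne; rewrite -hl /= eqxx.
by exists q; move: hl; rewrite last_rcons => ->.
Qed.

Lemma G1 (S : {set V}) (y z : V) w : mutual_visibility_set adj S -> y \in S -> z \in S ->
  size (gt_word y) < r -> (size (gt_word z) = r \/ gt_copy z = gt_copy y) ->
  SB (gt_word y) (gt_word z) w -> mk r (gt_copy y) w \notin S.
Proof.
move=> hS hy hz hyi hzc hsb; have [ne1 ne2 ne3] := SB_ne hsb.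
have [p [hsp hvis]] := hS y z hy hz.
have hyz : y != z by apply: contraNneq ne3 => ->.
have hs := shortest_size (or_intror erefl) hzc hsp.
have [q eq] := shortest_rcons hsp hyz; subst p.
have [hw _] := hsp.
have [x hx ex] := hit hw hsb.
have hxq : x \in q.
  move: hx; rewrite mem_rcons inE => /orP [/eqP exz|//]; by move: ne2; rewrite -ex exz eqxx.
have hint := interior_internal hw hs.
have hcp : all (fun x : V => gt_copy x == gt_copy y) q.
  apply: copy_const; first by move: hw => [/=]; rewrite rcons_path => /andP [].
  by rewrite /= hyi; apply/allP => u /hint.
have exm : mk r (gt_copy y) w = x.
  rewrite -ex; apply: mkE2; right; exact/eqP/(allP hcp).
rewrite exm; apply/negP => hxS.
have hxin : x \in y :: rcons q z.
  have h2 : x \in rcons q z by rewrite mem_rcons in_cons hxq orbT.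
  by apply/orP; right.
have [e|e] := hvis x hxin hxS.
  by move: ne1; rewrite -ex e eqxx.
by move: ne2; rewrite -ex e eqxx.
Qed.

Lemma G3 (S : {set V}) (y z : V) w1 w2 : mutual_visibility_set adj S -> y \in S -> z \in S ->
  size (gt_word y) = r -> size (gt_word z) = r ->
  SB (gt_word y) (gt_word z) w1 -> SB (gt_word y) (gt_word z) w2 ->
  mk r true w1 \in S -> mk r false w2 \in S -> False.
Proof.
move=> hS hy hz hyl hzl hsb1 hsb2 h1S h2S.
have [ne1 ne2 ne3] := SB_ne hsb1; have [ne1' ne2' _] := SB_ne hsb2.
have [p [hsp hvis]] := hS y z hy hz.
have hyz : y != z by apply: contraNneq ne3 => ->.
have hs := shortest_size (c := false) (or_introl hyl) (or_introl hzl) hsp.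
have [q eq] := shortest_rcons hsp hyz; subst p.
have [hw _] := hsp.
have hint := interior_internal hw hs.
have [x1 hx1 ex1] := hit hw hsb1.
have [x2 hx2 ex2] := hit hw hsb2.
have hx1q : x1 \in q.
  move: hx1; rewrite mem_rcons inE => /orP [/eqP exz|//]; by move: ne2; rewrite -ex1 exz eqxx.
have hx2q : x2 \in q.
  move: hx2; rewrite mem_rcons inE => /orP [/eqP exz|//]; by move: ne2'; rewrite -ex2 exz eqxx.
clear hsp hx1 hx2.
case: q hw hs hint hx1q hx2q hvis => [//|x0 q] hw hs hint hx1q hx2q hvis.
have hcp : all (fun x : V => gt_copy x == gt_copy x0) (x0 :: q).
  rewrite /= eqxx /=; apply: copy_const.
    have := hw.1; rewrite rcons_path => /andP [hp _]; by case/andP: hp.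
  by apply/allP => u /hint.
have inS : forall x, x \in x0 :: q -> gt_word x != gt_word y -> gt_word x != gt_word z -> x \notin S.
  move=> x hx n1 n2; apply/negP => hxS.
  have hxin : x \in y :: rcons (x0 :: q) z.
    have h2 : x \in rcons (x0 :: q) z by rewrite mem_rcons in_cons hx orbT.
    by apply/orP; right.
  have [e|e] := hvis x hxin hxS.
    by move: n1; rewrite e eqxx.
  by move: n2; rewrite e eqxx.
case: (boolP (gt_copy x0)) => hc.
  have e : mk r true w1 = x1.
    by rewrite -ex1; apply: mkE2; right; move/allP: hcp => /(_ _ hx1q) /eqP ->.
  by move: (inS _ hx1q); rewrite ex1 eq_sym ne1 eq_sym ne2 -e h1S => /(_ isT isT).
have e : mk r false w2 = x2.
  by rewrite -ex2; apply: mkE2; right; move/allP: hcp => /(_ _ hx2q) /eqP ->; rewrite (negbTE hc).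
by move: (inS _ hx2q); rewrite ex2 eq_sym ne1' eq_sym ne2' -e h2S => /(_ isT isT).
Qed.

Definition leafw (u : seq bool) : V := mk r false (u ++ nseq (r - size u) false).

Lemma leafw_word u : size u <= r -> gt_word (leafw u) = u ++ nseq (r - size u) false.
Proof. move=> h; rewrite /leafw mk_word // size_cat size_nseq; lia. Qed.

Lemma leafw_size u : size u <= r -> size (gt_word (leafw u)) = r.
Proof. move=> h; rewrite leafw_word // size_cat size_nseq; lia. Qed.

Lemma leafw_inw u : size u <= r -> inw u (gt_word (leafw u)).
Proof. move=> h; rewrite leafw_word //; exact: inw_cat. Qed.

End GT4.

Lemma disj_sum (T I : finType) (P : {set I}) (E : I -> {set T}) (U : {set T}) :
  (forall x, x \in P -> E x \subset U) ->
  (forall x y, x \in P -> y \in P -> x != y -> [disjoint E x & E y]) ->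
  \sum_(x in P) #|E x| <= #|U|.
Proof.
move: {2}#|P| (erefl #|P|) => n; elim: n P U => [|n IH] P U hn hsub hdis.
  by move/eqP: hn; rewrite cards_eq0 => /eqP ->; rewrite big_set0.
have [x hx] : exists x, x \in P.
  by apply/set0Pn; rewrite -card_gt0 hn.
rewrite (big_setD1 x hx) /=.
have h1 : \sum_(y in P :\ x) #|E y| <= #|U :\: E x|.
  apply: IH.
  - by move: hn; rewrite (cardsD1 x P) hx add1n => [[]].
  - move=> y; rewrite !inE => /andP [nyx hy]; apply/subsetP => l hl.
    rewrite inE (subsetP (hsub y hy) l hl) andbT.
    by rewrite (disjointFr (hdis y x hy hx nyx) hl).
  - move=> y z; rewrite !inE => /andP [_ hy] /andP [_ hz]; exact: hdis.
have h2 : #|E x| + #|U :\: E x| = #|U|.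
  by rewrite -(cardsID (E x) U) (setIidPr (hsub x hx)).
rewrite -h2; exact: leq_add.
Qed.

Lemma two_le_card (T : finType) (a b : T) (A : {set T}) : a \in A -> b \in A -> a != b -> 2 <= #|A|.
Proof.
move=> ha hb ne; have : [set a; b] \subset A by apply/subsetP => u; rewrite !inE => /orP [] /eqP ->.
by move/subset_leq_card; rewrite cards2 ne.
Qed.

Lemma exists_other (T : finType) (P : {set T}) x : 2 <= #|P| -> exists2 z, z \in P & z != x.
Proof.
move=> h; have : 0 < #|P :\ x| by move: h; rewrite (cardsD1 x P); case: (x \in P) => /=; lia.
rewrite card_gt0 => /set0Pn [z]; rewrite !inE => /andP [nzx hz]; by exists z.
Qed.

Lemma inw_head b s : inw [:: b] (b :: s).
Proof. by rewrite /inw /= eqxx. Qed.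

Lemma inw_nhead b t s : ~~ inw (b :: t) (~~ b :: s).
Proof. by rewrite /inw /=; case: b. Qed.

Lemma inw_nil s : inw [::] s.
Proof. by []. Qed.

Section GT5.
Variable r : nat.
Hypothesis hr : 2 <= r.
Notation V := (GTV r).
Notation adj := (@gt_adj r).

Definition Lv : {set V} := [set x : V | size (gt_word x) == r].
Definition Ic c : {set V} := [set x : V | (size (gt_word x) < r) && (gt_copy x == c)].

Lemma neq_word (x y : V) : gt_word x != gt_word y -> x != y.
Proof. by apply: contraNneq => ->. Qed.

Lemma leafw_Lv u : size u <= r -> leafw r u \in Lv.
Proof. by move=> h; rewrite inE leafw_size. Qed.


Lemma leaf_distinct (l1 l2 : V) u b : inw (rcons u b) (gt_word l1) -> inw (rcons u (~~ b)) (gt_word l2) -> l1 != l2.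
Proof.
move=> h1 h2; apply/negP => /eqP e; rewrite e in h1.
by have := inw_rcons_uniq h1 h2; case: (b).
Qed.

Section LT.
Variables (S : {set V}) (c : bool).
Hypothesis hS : mutual_visibility_set adj S.
Let P := S :&: Ic c.
Hypothesis hP : 2 <= #|P|.

Lemma P_int x : x \in P -> [/\ x \in S, size (gt_word x) < r & gt_copy x = c].
Proof. by rewrite !inE => /and3P [h1 h2 /eqP h3]. Qed.

Lemma P_mk x : x \in P -> mk r c (gt_word x) = x.
Proof. by case/P_int => _ _ h; apply: mkE2; right. Qed.

Lemma P_eq x y : x \in P -> y \in P -> gt_word x = gt_word y -> x = y.
Proof. by move=> hx hy e; rewrite -(P_mk hx) -(P_mk hy) e. Qed.

Lemma noSB x z z' : x \in P -> z \in P -> z' \in S -> (size (gt_word z') = r \/ gt_copy z' = c) ->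
  ~~ SB (gt_word z) (gt_word z') (gt_word x).
Proof.
move=> hx hz hz' hc; apply/negP => hsb.
case/P_int: (hz) => hzS hzi hzc.
have := G1 hS hzS hz' hzi (ltac:(by rewrite hzc)) hsb; rewrite hzc P_mk //.
by case/P_int: hx => -> _ _.
Qed.

Definition E x := [set l in Lv | [forall z in P, (z != x) ==> SB (gt_word z) (gt_word l) (gt_word x)]].

Lemma E_sub x : x \in P -> E x \subset Lv :\: S.
Proof.
move=> hx; apply/subsetP => l; rewrite !inE => /andP [hl /forall_inP hall].
rewrite hl andbT; apply/negP => hlS.
have [z0 hz0 ne] := exists_other x hP.
have := noSB hx hz0 hlS (or_introl (eqP hl)); by rewrite (implyP (hall z0 hz0) ne).
Qed.

Lemma E_disj x y : x \in P -> y \in P -> x != y -> [disjoint E x & E y].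
Proof.
move=> hx hy ne; rewrite -setI_eq0; apply/eqP/setP => l; rewrite !inE; apply/negP.
case/andP => /andP [_ /forall_inP h1] /andP [_ /forall_inP h2].
have s1 := implyP (h1 y hy) (ltac:(by rewrite eq_sym)).
have s2 := implyP (h2 x hx) ne.
have e1 := SB_dT s1; have e2 := SB_dT s2.
have : dT (gt_word x) (gt_word y) = 0 by move: e1 e2; rewrite (dTC (gt_word y) (gt_word x)); lia.
by move/dT0/(P_eq hx hy)/eqP; rewrite (negbTE ne).
Qed.

Lemma E_card x : x \in P -> 2 <= #|E x|.
Proof.
move=> hx; have [hxS hxi hxc] := P_int hx; set w := gt_word x.
have [z0 hz0 ne0] := exists_other x hP.
have neqw : forall z, z \in P -> z != x -> gt_word z != w.
  move=> z hz nz; apply/negP => /eqP e; move/negP: nz; apply; apply/eqP; exact: P_eq hz hx e.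
have noSBP : forall z z', z \in P -> z' \in P -> ~~ SB (gt_word z) (gt_word z') w.
  move=> z z' hz hz'; apply: noSB => //; first by case/P_int: hz'.
  by right; case/P_int: hz'.
have gtw : forall z, z \in P -> z != x -> inw w (gt_word z) -> size w < size (gt_word z).
  move=> z hz nz hi; rewrite ltn_neqAle inw_size // andbT; apply/negP => /eqP e.
  by move: (neqw z hz nz); rewrite (inw_eq hi e) eqxx.
case: (boolP (inw w (gt_word z0))) => h0.
  set b0 := nth false (gt_word z0) (size w).
  have hb0 : inw (rcons w b0) (gt_word z0) by apply: inw_nth => //; apply: gtw.
  have all0 : forall z, z \in P -> z != x -> inw (rcons w b0) (gt_word z).
    move=> z hz nz; apply/negPn/negP => hn.
    have := noSBP z0 z hz0 hz; rewrite /SB (SB1_intro hb0 hn) ?neqw //.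
  have inE' : forall l : V, size (gt_word l) = r -> ~~ inw (rcons w b0) (gt_word l) -> l \in E x.
    move=> l hl hn; rewrite inE inE hl eqxx /=; apply/forall_inP => z hz; apply/implyP => nz.
    rewrite /SB (SB1_intro (all0 z hz nz) hn) //.
    by apply/eqP => e; move: hxi; rewrite -/w -e hl ltnn.
  case ew : w => [|w0 w'].
    have s1 : size [:: ~~ b0; false] <= r by [].
    have s2 : size [:: ~~ b0; true] <= r by [].
    apply: (two_le_card (a := leafw r [:: ~~ b0; false]) (b := leafw r [:: ~~ b0; true])).
    - apply: inE'; first exact: leafw_size.
      by rewrite leafw_word //= ew; exact: inw_nhead.
    - apply: inE'; first exact: leafw_size.
      by rewrite leafw_word //= ew; exact: inw_nhead.
    - apply: (leaf_distinct (u := [:: ~~ b0]) (b := false)); exact: leafw_inw.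
  have s1 : size (rcons w (~~ b0)) <= r by rewrite size_rcons.
  have s2 : size [:: ~~ w0] <= r by apply: leq_trans hr.
  apply: (two_le_card (a := leafw r (rcons w (~~ b0))) (b := leafw r [:: ~~ w0])).
  - apply: inE'; first exact: leafw_size.
    apply/negP => hi; have := inw_rcons_uniq hi (leafw_inw s1); by case: (b0).
  - apply: inE'; first exact: leafw_size.
    by rewrite leafw_word // ew /=; exact: inw_nhead.
  - apply: (leaf_distinct (u := [::]) (b := w0)); last exact: leafw_inw.
    apply: inw_trans (leafw_inw s1); apply: inw_trans (inw_rcons_r _ (inw_refl w)).
    by rewrite ew; exact: inw_head.
have all0 : forall z, z \in P -> z != x -> ~~ inw w (gt_word z).
  move=> z hz nz; apply/negP => hi.
  set b := nth false (gt_word z) (size w).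
  have hb : inw (rcons w b) (gt_word z) by apply: inw_nth => //; apply: gtw.
  have hn : ~~ inw (rcons w b) (gt_word z0) by apply: contra h0; exact: inw_rcons.
  have nw : gt_word z0 != w by apply: contraNneq h0 => ->; exact: inw_refl.
  by have := noSBP z z0 hz hz0; rewrite /SB (SB1_intro hb hn nw).
have inE' : forall bt, rcons w bt \in [:: rcons w false; rcons w true] -> leafw r (rcons w bt) \in E x.
  move=> bt _; have s1 : size (rcons w bt) <= r by rewrite size_rcons.
  rewrite inE inE leafw_size // eqxx /=; apply/forall_inP => z hz; apply/implyP => nz.
  rewrite /SB (@SB1_intro _ _ _ bt (leafw_inw s1)) ?orbT //.
    by apply: contra (all0 z hz nz); exact: inw_rcons.
  exact: neqw.
apply: (two_le_card (inE' false _) (inE' true _)); rewrite ?inE ?eqxx ?orbT //.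
have s1 : size (rcons w false) <= r by rewrite size_rcons.
have s2 : size (rcons w true) <= r by rewrite size_rcons.
apply: (leaf_distinct (u := w) (b := false)); exact: leafw_inw.
Qed.

Lemma lemT : 2 * #|P| <= #|Lv :\: S|.
Proof.
have := disj_sum E_sub E_disj.
have : \sum_(x in P) 2 <= \sum_(x in P) #|E x| by apply: leq_sum => x hx; exact: E_card.
rewrite sum_nat_const mulnC; exact: leq_trans.
Qed.

End LT.
End GT5.

Section GT6.
Variable r : nat.
Hypothesis hr : 2 <= r.
Notation V := (GTV r).
Notation adj := (@gt_adj r).

Definition Good (w v : seq bool) (A B : seq V) :=
  forall a b, a \in A -> b \in B -> SB (gt_word a) (gt_word b) w /\ SB (gt_word a) (gt_word b) v.

Lemma HeadDiff bb (A B : V) v : inw [:: bb] (gt_word A) -> inw [:: ~~ bb] (gt_word B) ->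
  size (gt_word A) = r -> size (gt_word B) = r -> size v < r -> inw v (gt_word A) -> SB (gt_word A) (gt_word B) v.
Proof.
move=> hA hB sA sB sv hv.
have hn := inw_nth hv (ltac:(by rewrite sA)).
apply/orP; left; apply: (SB1_intro hn); last by apply/eqP => e; move: sv; rewrite -e sB ltnn.
apply/negP => hi.
have hb : inw [:: bb] (rcons v (nth false (gt_word A) (size v))).
  case/orP: (inw_comp hA hn) => // h.
  have := inw_size h; rewrite size_rcons ltnS leqn0 => /nilP ev.
  have := inw_eq h; rewrite ev /= => /(_ erefl) ->; exact: inw_refl.
have := inw_rcons_uniq (w := [::]) (inw_trans hb hi) hB.
by case: (bb).
Qed.

Lemma WL_comp w v : size w < r -> size v < r -> inw v w ->
  exists a1 a2 b1 b2 : V, [/\ [&& a1 \in Lv r, a2 \in Lv r, b1 \in Lv r & b2 \in Lv r],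
     a1 != a2, b1 != b2 & Good w v [:: a1; a2] [:: b1; b2]].
Proof.
move=> sw sv hvw.
pose ws := if w is [::] then [:: false] else w.
pose bb := head false ws.
have sws : size ws < r by rewrite /ws; case: (w) sw => //= _; lia.
have hws : inw w ws by rewrite /ws; case: (w) => [|? ?]; [exact: inw_nil | exact: inw_refl].
have hbb : inw [:: bb] ws by rewrite /bb /ws; case: (w) => [|w0 w'] /=; exact: inw_head.
have s1 : forall b, size (rcons ws b) <= r by move=> b; rewrite size_rcons.
have s2 : forall b, size [:: ~~ bb; b] <= r by [].
exists (leafw r (rcons ws false)), (leafw r (rcons ws true)), (leafw r [:: ~~ bb; false]), (leafw r [:: ~~ bb; true]).
split.
- by rewrite !leafw_Lv.
- by apply: (leaf_distinct (u := ws) (b := false)); exact: leafw_inw.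
- by apply: (leaf_distinct (u := [:: ~~ bb]) (b := false)); exact: leafw_inw.
move=> a b; rewrite !inE => ha hb.
have [ba ea] : exists ba, a = leafw r (rcons ws ba) by case/orP: ha => /eqP ->; eexists.
have [bc eb] : exists bc, b = leafw r [:: ~~ bb; bc] by case/orP: hb => /eqP ->; eexists.
subst a b.
have iA : inw ws (gt_word (leafw r (rcons ws ba))) by apply: inw_trans (leafw_inw (s1 ba)); exact: inw_rcons_r (inw_refl _).
have hA : inw [:: bb] (gt_word (leafw r (rcons ws ba))) by apply: inw_trans hbb iA.
have hB : inw [:: ~~ bb] (gt_word (leafw r [:: ~~ bb; bc])).
  by apply: inw_trans (leafw_inw (s2 bc)); exact: inw_head.
split; apply: HeadDiff hA hB _ _ _ _ => //; rewrite ?leafw_size //.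
- exact: inw_trans hws iA.
- exact: inw_trans hvw (inw_trans hws iA).
Qed.

Lemma WL_inc w v : size w < r -> size v < r -> ~~ inw v w -> ~~ inw w v ->
  exists a1 a2 b1 b2 : V, [/\ [&& a1 \in Lv r, a2 \in Lv r, b1 \in Lv r & b2 \in Lv r],
     a1 != a2, b1 != b2 & Good w v [:: a1; a2] [:: b1; b2]].
Proof.
move=> sw sv n1 n2.
have s1 : forall b, size (rcons w b) <= r by move=> b; rewrite size_rcons.
have s2 : forall b, size (rcons v b) <= r by move=> b; rewrite size_rcons.
exists (leafw r (rcons w false)), (leafw r (rcons w true)), (leafw r (rcons v false)), (leafw r (rcons v true)).
split.
- by rewrite !leafw_Lv.
- by apply: (leaf_distinct (u := w) (b := false)); exact: leafw_inw.
- by apply: (leaf_distinct (u := v) (b := false)); exact: leafw_inw.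
move=> a b; rewrite !inE => ha hb.
have [ba ea] : exists ba, a = leafw r (rcons w ba) by case/orP: ha => /eqP ->; eexists.
have [bc eb] : exists bc, b = leafw r (rcons v bc) by case/orP: hb => /eqP ->; eexists.
subst a b.
have iA := leafw_inw (s1 ba); have iB := leafw_inw (s2 bc).
split; apply/orP.
- left; apply: (SB1_intro iA).
    apply/negP => h; have := inw_comp (inw_rcons h) (inw_rcons iB); by rewrite (negbTE n1) (negbTE n2).
  by apply/eqP => e; move: sw; rewrite -e leafw_size ?ltnn.
- right; apply: (SB1_intro iB).
    apply/negP => h; have := inw_comp (inw_rcons iA) (inw_rcons h); by rewrite (negbTE n1) (negbTE n2).
  by apply/eqP => e; move: sv; rewrite -e leafw_size ?ltnn.
Qed.

Lemma WL w v : size w < r -> size v < r ->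
  exists a1 a2 b1 b2 : V, [/\ [&& a1 \in Lv r, a2 \in Lv r, b1 \in Lv r & b2 \in Lv r],
     a1 != a2, b1 != b2 & Good w v [:: a1; a2] [:: b1; b2]].
Proof.
move=> sw sv.
case: (boolP (inw v w)) => h1; first exact: WL_comp.
case: (boolP (inw w v)) => h2; last exact: WL_inc.
have [a1 [a2 [b1 [b2 [hl n1 n2 hg]]]]] := WL_comp sv sw h2.
exists a1, a2, b1, b2; split => // a b ha hb; by case: (hg a b ha hb).
Qed.

Lemma lemC (S : {set V}) x1 x2 : mutual_visibility_set adj S -> x1 \in S :&: Ic r true -> x2 \in S :&: Ic r false ->
  2 <= #|Lv r :\: S|.
Proof.
move=> hS; rewrite !inE => /and3P [h1S h1i /eqP h1c] /and3P [h2S h2i /eqP h2c].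
have [a1 [a2 [b1 [b2 [hl n1 n2 hg]]]]] := WL h1i h2i.
case/and4P: hl => la1 la2 lb1 lb2.
rewrite leqNgt; apply/negP => hlt.
have pick : forall u1 u2 : V, u1 \in Lv r -> u2 \in Lv r -> u1 != u2 -> exists2 u, u \in S & u \in [:: u1; u2].
  move=> u1 u2 l1 l2 ne; case: (boolP (u1 \in S)) => hu1; first by exists u1; rewrite ?inE ?eqxx.
  case: (boolP (u2 \in S)) => hu2; first by exists u2; rewrite ?inE ?eqxx ?orbT.
  have : 2 <= #|Lv r :\: S| by apply: (two_le_card (a := u1) (b := u2)); rewrite // inE ?hu1 ?hu2.
  by rewrite leqNgt hlt.
have [a haS ha] := pick a1 a2 la1 la2 n1.
have [b hbS hb] := pick b1 b2 lb1 lb2 n2.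
have [sb1 sb2] := hg a b ha hb.
have sa : size (gt_word a) = r by move: ha; rewrite !inE => /orP [] /eqP ->; [move: la1 | move: la2]; rewrite inE => /eqP.
have sb : size (gt_word b) = r by move: hb; rewrite !inE => /orP [] /eqP ->; [move: lb1 | move: lb2]; rewrite inE => /eqP.
apply: (G3 hS haS hbS sa sb sb1 sb2).
  have e1 : mk r true (gt_word x1) = x1 by apply: mkE2; right.
  by rewrite e1.
have e2 : mk r false (gt_word x2) = x2 by apply: mkE2; right.
by rewrite e2.
Qed.

End GT6.

Lemma sum_pow2 n : \sum_(i < n) 2 ^ i = 2 ^ n - 1.
Proof.
elim: n => [|n IH]; first by rewrite big_ord0.
rewrite big_ord_recr /= IH expnS; have := expn_gt0 2 n; lia.
Qed.

Section GT7.
Variable r : nat.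
Notation V := (GTV r).
Notation adj := (@gt_adj r).

Definition Iall : {set V} := [set x : V | size (gt_word x) < r].

Lemma card_Lv : #|Lv r| = 2 ^ r.
Proof.
pose f := fun t : r.-tuple bool => mk r false t.
have finj : injective f.
  move=> t1 t2; rewrite /f => e; apply: val_inj.
  by have := congr1 (@gt_word r) e; rewrite !mk_word ?size_tuple.
have -> : Lv r = f @: [set: r.-tuple bool].
  apply/setP => x; rewrite inE; apply/idP/imsetP.
    move=> hx; exists (Tuple hx) => //; rewrite /f /=; symmetry; apply: mkE2; left; exact/eqP.
  by move=> [t _ ->]; rewrite /f mk_word ?size_tuple.
by rewrite card_imset // cardsT card_tuple card_bool.
Qed.

Lemma tag_ext' (u v : {d : 'I_r & d.-tuple bool}) : (tagged u : seq bool) = tagged v -> u = v.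
Proof.
case: u v => [d t] [d' t'] /= h.
have e : d = d' by apply: val_inj; rewrite /= -(size_tuple t) -(size_tuple t') h.
subst d'; congr existT; exact: val_inj.
Qed.

Lemma card_Iall : #|Iall| = 2 ^ r.+1 - 2.
Proof.
pose g := fun u : bool * {d : 'I_r & d.-tuple bool} => mk r u.1 (tagged u.2).
have hsz : forall u : {d : 'I_r & d.-tuple bool}, size (tagged u : seq bool) < r.
  by case=> d t /=; rewrite size_tuple.
have ginj : injective g.
  move=> [c1 u1] [c2 u2]; rewrite /g /= => e.
  have ew := congr1 (@gt_word r) e; rewrite !mk_word ?(ltnW (hsz _)) // in ew.
  have ec := congr1 (@gt_copy r) e; rewrite !mk_copy !hsz !andbT in ec.
  by rewrite ec (tag_ext' ew).
have -> : Iall = g @: [set: bool * {d : 'I_r & d.-tuple bool}].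
  apply/setP => x; rewrite inE; apply/idP/imsetP.
    move=> hx; exists (gt_copy x, existT (fun d : 'I_r => d.-tuple bool) (Ordinal hx) (in_tuple (gt_word x))) => //.
    by rewrite /g /= mkE.
  by move=> [u _ ->]; rewrite /g mk_word ?hsz // ltnW.
rewrite card_imset // cardsT card_prod card_bool card_tagged.
rewrite sumnE big_map big_enum /=.
under eq_bigr do rewrite card_tuple card_bool.
rewrite sum_pow2 expnS; have := expn_gt0 2 r; lia.
Qed.

Lemma construct_mv (z : V) : size (gt_word z) < r -> mutual_visibility_set adj (Lv r :|: [set z]).
Proof.
move=> hz u v hu hv.
set c := if (u == z) || (v == z) then gt_copy z else ~~ gt_copy z.
have hmk2 : forall y, y \in Lv r :|: [set z] -> ((y == z) -> gt_copy z = c) -> mk r c (gt_word y) = y.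
  move=> y hy hc; apply: mkE2; move: hy; rewrite !inE => /orP [/eqP h|/eqP e]; first by left.
  by right; rewrite e; apply: hc; rewrite e.
have eu : mk r c (gt_word u) = u by apply: hmk2 => // hu'; rewrite /c hu'.
have ev : mk r c (gt_word v) = v by apply: hmk2 => // hv'; rewrite /c hv' orbT.
rewrite -eu -ev; apply: vis_construct; rewrite ?size_wd // => x hx hxi hxc.
move: hx; rewrite !inE => /orP [/eqP h|/eqP ex]; first by move: hxi; rewrite h ltnn.
subst x; rewrite eu ev.
move: hxc; rewrite /c; case: (u =P z) => [->|_]; first by left.
case: (v =P z) => [->|_]; first by right.
by case: (gt_copy z).
Qed.

Lemma construct_card (z : V) : size (gt_word z) < r -> #|Lv r :|: [set z]| = 2 ^ r + 1.
Proof.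
move=> hz; have hzn : z \notin Lv r by rewrite inE neq_ltn hz.
by rewrite setUC cardsU1 hzn card_Lv addnC.
Qed.

Hypothesis hr : 2 <= r.

Lemma upper (S : {set V}) : mutual_visibility_set adj S ->
  #|S| <= 2 ^ r + 1 /\ (#|S| = 2 ^ r + 1 -> exists2 x, x \in Iall & S = Lv r :|: [set x]).
Proof.
move=> hS.
have e1 : #|S :&: Lv r| + #|Lv r :\: S| = 2 ^ r by rewrite -card_Lv -(cardsID S (Lv r)) setIC.
have e2 : #|S| = #|S :&: Lv r| + #|S :\: Lv r| by rewrite cardsID.
have e3 : #|S :\: Lv r| = #|S :&: Ic r true| + #|S :&: Ic r false|.
  have hn : forall x : V, (size (gt_word x) != r) = (size (gt_word x) < r).
    by move=> x; rewrite neq_ltn (ltnNge r) size_wd orbF.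
  rewrite -(cardsID (Ic r true) (S :\: Lv r)); congr (_ + _); apply: eq_card => x; rewrite !inE hn;
    case: (x \in S); rewrite ?andbF //=; case: (gt_copy x); by case: (size (gt_word x) < r).
have hpq : forall (p q b : nat), (2 <= p -> 2 * p <= b) -> (2 <= q -> 2 * q <= b) -> (1 <= p -> 1 <= q -> 2 <= b) ->
   p + q <= b + 1 /\ (p + q = b + 1 -> b = 0 /\ p + q = 1).
  move=> p q b h1 h2 h3.
  case: (ltnP 1 p) => hp; [have := h1 hp | ]; (case: (ltnP 1 q) => hq; [have := h2 hq | ]);
    (case: (ltnP 0 p) => hp1; case: (ltnP 0 q) => hq1; try have := h3 hp1 hq1); lia.
have hC : 1 <= #|S :&: Ic r true| -> 1 <= #|S :&: Ic r false| -> 2 <= #|Lv r :\: S|.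
  rewrite !card_gt0 => /set0Pn [x1 hx1] /set0Pn [x2 hx2].
  exact: (lemC hr hS hx1 hx2).
have [hle heq] := hpq _ _ _ (lemT hr hS) (lemT hr hS) hC.
split; first by lia.
move=> hc.
have [hb hpq1] : #|Lv r :\: S| = 0 /\ #|S :&: Ic r true| + #|S :&: Ic r false| = 1 by apply: heq; lia.
have hsub : Lv r \subset S by rewrite -setD_eq0 -cards_eq0 hb.
have : #|S :\: Lv r| = 1 by rewrite e3.
move/eqP/cards1P => [x hx].
exists x.
  have : x \in S :\: Lv r by rewrite hx set11.
  by rewrite !inE => /andP [hn' _]; rewrite ltn_neqAle hn' size_wd.
apply/setP => y; rewrite in_setU in_set1.
case hyL : (y \in Lv r); first by rewrite (subsetP hsub y hyL).
have := f_equal (fun A : {set V} => y \in A) hx; rewrite /= in_setD in_set1 hyL /= => <-.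
by [].
Qed.

End GT7.

Theorem mainTheorem3 (r : nat) (hr : 2 <= r) :
  mu_number (@gt_adj r) (2 ^ r + 1) /\
  num_mu_sets (@gt_adj r) (2 ^ r.+1 - 2).
Proof.
have hroot : size (gt_word (mk r true [::])) < r by rewrite mk_word //=; lia.
split.
  split; last by move=> S hS; exact: (upper hr hS).1.
  exists (Lv r :|: [set mk r true [::]]); split; [exact: construct_mv | exact: construct_card].
exists [set Lv r :|: [set x] | x in Iall r]; split.
  move=> S; split.
    case/imsetP => x hx ->; rewrite inE in hx; split; first exact: construct_mv.
    by move=> S' hS'; rewrite construct_card //; exact: (upper hr hS').1.
  case=> hS hmax.
  have := hmax _ (construct_mv hroot); rewrite construct_card // => hge.
  have [hle heq] := upper hr hS.
  have e : #|S| = 2 ^ r + 1 by apply/eqP; rewrite eqn_leq hle hge.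
  have [x hx ->] := heq e.
  by apply/imsetP; exists x.
rewrite card_in_imset ?card_Iall // => x y hx hy e.
have : x \in Lv r :|: [set y] by rewrite -e !inE eqxx orbT.
rewrite !inE => /orP [hl|/eqP //].
by move: hx; rewrite inE (eqP hl) ltnn.
Qed.
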